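(* Let $G$ be a finite simple graph. Then $G$ is a Tutte-Berge graph if and only if the induced subgraph of $G$ on $D(G)$ has no edges (i.e. $D(G)$ consists of isolated vertices only).
   Context: $\nu(G)$ is the matching number of $G$. For $U\subseteq V(G)$, $N_G(U)$ is the set of vertices of $G$ adjacent to at least one vertex of $U$. A set $T\subseteq V(G)$ is independent if no edge of $G$ has both endpoints in $T$. $G$ is a Tutte-Berge graph if there exists an independent set $T$ of $G$ with $|T| = |N_G(T)| + |V(G)| - 2\nu(G)$. $D(G)$ is the set of vertices of $G$ that are left uncovered by at least one maximum matching of $G$; $A(G)$ is the set of vertices in $V(G)\setminus D(G)$ adjacent to at least one vertex of $D(G)$; $C(G)=V(G)\setminus(D(G)\cup A(G))$ (Gallai–Edmonds decomposition). *)

(* Defs.v *)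
From mathcomp Require Import all_boot.
Set Implicit Arguments. Unset Strict Implicit. Unset Printing Implicit Defensive.

(* A finite simple graph: vertex type T (finType) with adjacency relation e,
   assumed symmetric and irreflexive (as hypotheses of the theorem). *)

Section Graph.
Variables (T : finType) (e : rel T).

Definition is_edge (E : {set T}) : bool :=
  [exists x, exists y, (e x y) && (E == [set x; y])].

Definition matching (M : {set {set T}}) : bool :=
  [forall E in M, is_edge E] &&
  [forall E1 in M, forall E2 in M, (E1 != E2) ==> [disjoint E1 & E2]].

Definition nu : nat := \max_(M : {set {set T}} | matching M) #|M|.

Definition max_matching (M : {set {set T}}) : bool := matching M && (#|M| == nu).

Definition covered (M : {set {set T}}) : {set T} := cover M.

Definition nbhd (U : {set T}) : {set T} := [set y | [exists x in U, e x y]].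

Definition independent (S : {set T}) : bool :=
  [forall x in S, forall y in S, ~~ e x y].

(* Tutte-Berge graph: exists independent S with |S| = |N(S)| + |V| - 2 nu,
   written without subtraction as |S| + 2 nu = |N(S)| + |V| (exact over Z). *)
Definition tutte_berge_graph : Prop :=
  exists S : {set T}, independent S /\
    #|S| + 2 * nu = #|nbhd S| + #|T|.

Definition Dset : {set T} :=
  [set x | [exists M, max_matching M && (x \notin covered M)]].

End Graph.

(* Main.v *)
Require Import Defs.
From mathcomp Require Import all_boot.
Set Implicit Arguments. Unset Strict Implicit. Unset Printing Implicit Defensive.

Lemma edge_pair (T : finType) (e : rel T) (e_sym : symmetric e) (e_irr : irreflexive e)
  (x y : T) : is_edge e [set x; y] -> e x y.
Proof.
case/existsP=> a /existsP [b /andP [eab /eqP E]].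
have ab : a != b by apply: contraTneq eab => ->; rewrite e_irr.
have xa : x \in [set a; b] by rewrite -E set21.
have ya : y \in [set a; b] by rewrite -E set22.
have aa : a \in [set x; y] by rewrite E set21.
have bb : b \in [set x; y] by rewrite E set22.
case/set2P: xa => ?; case/set2P: ya => ?; subst => //.
- by move: bb; case/set2P=> ba; move: ab; rewrite ba eqxx.
- by rewrite e_sym.
- by move: aa; case/set2P=> ba; move: ab; rewrite ba eqxx.
Qed.

Lemma edge_form (T : finType) (e : rel T) (E : {set T}) :
  is_edge e E -> exists x y, e x y /\ E = [set x; y].
Proof. by case/existsP=> a /existsP [b /andP [eab /eqP E']]; exists a, b. Qed.

Lemma match_uniq (T : finType) (e : rel T) M E1 E2 x :
  matching e M -> E1 \in M -> E2 \in M -> x \in E1 -> x \in E2 -> E1 = E2.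
Proof.
case/andP=> _ /forallP H h1 h2 x1 x2; apply/eqP; apply/negPn/negP => ne.
have := H E1; rewrite h1 /= => /forallP /(_ E2); rewrite h2 ne /=.
by move/disjoint_setI0 => /setP /(_ x); rewrite inE x1 x2 inE.
Qed.

Lemma match_edge (T : finType) (e : rel T) M E :
  matching e M -> E \in M -> is_edge e E.
Proof. by case/andP=> /forallP H _ h; have := H E; rewrite h. Qed.

Definition partner (T : finType) (M : {set {set T}}) (x : T) : T :=
  odflt x [pick y | [set x; y] \in M].

Lemma cover_ex (T : finType) (e : rel T) M x :
  matching e M -> x \in cover M -> exists y, [set x; y] \in M.
Proof.
move=> mM /bigcupP [E hE xE].
have [a [b [_ Eab]]] := edge_form (match_edge mM hE).
move: xE; rewrite Eab; case/set2P=> ->; first by exists b; rewrite -Eab.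
by exists a; rewrite setUC -Eab.
Qed.

Lemma partnerP (T : finType) (e : rel T) M x :
  matching e M -> x \in cover M -> [set x; partner M x] \in M.
Proof.
move=> mM /(cover_ex mM) [y hy]; rewrite /partner; case: pickP => [z hz //|/(_ y)].
by rewrite hy.
Qed.

Lemma in_cover (T : finType) (M : {set {set T}}) E x : E \in M -> x \in E -> x \in cover M.
Proof. by move=> hE xE; apply/bigcupP; exists E. Qed.

Lemma pair_cover (T : finType) (M : {set {set T}}) x y : [set x; y] \in M -> x \in cover M /\ y \in cover M.
Proof. by move=> h; split; apply: (in_cover h); rewrite !inE eqxx ?orbT. Qed.

Lemma partner_uniq (T : finType) (e : rel T) (e_sym : symmetric e) (e_irr : irreflexive e) M x y :
  matching e M -> [set x; y] \in M -> partner M x = y.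
Proof.
move=> mM h.
have xc := (pair_cover h).1.
have hp := partnerP mM xc.
have E : [set x; y] = [set x; partner M x].
  by apply: (@match_uniq _ _ _ _ _ x mM h hp); rewrite !inE eqxx.
have exy : e x y := edge_pair e_sym e_irr (match_edge mM h).
have : y \in [set x; partner M x] by rewrite -E !inE eqxx orbT.
case/set2P=> [yx|->//]; by move: exy; rewrite yx e_irr.
Qed.

Lemma partner_edge (T : finType) (e : rel T) (e_sym : symmetric e) (e_irr : irreflexive e) M x :
  matching e M -> x \in cover M -> e x (partner M x).
Proof. by move=> mM xc; apply: (edge_pair e_sym e_irr (match_edge mM (partnerP mM xc))). Qed.

Lemma partner_invol (T : finType) (e : rel T) (e_sym : symmetric e) (e_irr : irreflexive e) M x :
  matching e M -> x \in cover M -> partner M (partner M x) = x.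
Proof.
move=> mM xc; apply: (partner_uniq e_sym e_irr mM); rewrite setUC; exact: (partnerP mM xc).
Qed.

Lemma partner_cover (T : finType) (e : rel T) M x :
  matching e M -> x \in cover M -> partner M x \in cover M.
Proof. by move=> mM xc; exact: (pair_cover (partnerP mM xc)).2. Qed.

Lemma card_cover (T : finType) (e : rel T) (e_irr : irreflexive e) M :
  matching e M -> #|cover M| = 2 * #|M|.
Proof.
move=> mM.
have tI : trivIset M.
  apply/trivIsetP => A B hA hB nAB.
  rewrite -setI_eq0; apply/eqP/setP => z; rewrite !inE.
  apply/negP => /andP [zA zB]; by move: nAB; rewrite (match_uniq mM hA hB zA zB) eqxx.
move: tI; rewrite /trivIset => /eqP <-.
rewrite mulnC -sum_nat_const; apply: eq_bigr => E hE.
have [a [b [eab ->]]] := edge_form (match_edge mM hE).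
rewrite cards2; case: eqP => // ab; by move: eab; rewrite ab e_irr.
Qed.

Fixpoint apath (T : finType) (e : rel T) (M : {set {set T}}) (s : T) (ps : seq (T * T)) : bool :=
  if ps is (a, b) :: ps' then [&& e s a, [set a; b] \in M & apath e M b ps'] else true.

Definition pflat (T : finType) (ps : seq (T * T)) : seq T := flatten [seq [:: p.1; p.2] | p <- ps].
Definition pend (T : finType) (s : T) (ps : seq (T * T)) : T := last s [seq p.2 | p <- ps].

Lemma apath_cat (T : finType) (e : rel T) M s ps1 ps2 :
  apath e M s (ps1 ++ ps2) = apath e M s ps1 && apath e M (pend s ps1) ps2.
Proof.
elim: ps1 s => [|[a b] ps1 IH] s //=.
by rewrite IH !andbA.
Qed.

Lemma pflat_cat (T : finType) (ps1 ps2 : seq (T * T)) : pflat (ps1 ++ ps2) = pflat ps1 ++ pflat ps2.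
Proof. by rewrite /pflat map_cat flatten_cat. Qed.

Lemma pend_cat1 (T : finType) (s : T) ps a b : pend s (ps ++ [:: (a, b)]) = b.
Proof. by rewrite /pend map_cat last_cat. Qed.

Lemma pflat_split (T : finType) (ps : seq (T * T)) x : x \in pflat ps ->
  exists ps1 a b ps2, ps = ps1 ++ (a, b) :: ps2 /\ (x = a \/ x = b).
Proof.
elim: ps => [|[a b] ps IH] //=.
rewrite /pflat /= !inE -/(pflat ps) => /orP [/eqP xa|/orP [/eqP xb| /IH [ps1 [a' [b' [ps2 [-> H]]]]]]].
- by exists [::], a, b, ps; split; [|left].
- by exists [::], a, b, ps; split; [|right].
- by exists ((a, b) :: ps1), a', b', ps2.
Qed.

Lemma apath_mono (T : finType) (e : rel T) (M M' : {set {set T}}) s ps :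
  apath e M s ps -> (forall a b, a \in pflat ps -> [set a; b] \in M -> [set a; b] \in M') ->
  apath e M' s ps.
Proof.
elim: ps s => [|[a b] ps IH] s //= /and3P [esa hab hp] H.
rewrite esa (H a b) /=; last by []; last by rewrite /pflat /= inE eqxx.
apply: IH => // a' b' ha'; apply: H; by rewrite /pflat /= !inE ha' !orbT.
Qed.

Lemma notcoverP (T : finType) (M : {set {set T}}) x :
  reflect (forall E, E \in M -> x \notin E) (x \notin cover M).
Proof.
apply: (iffP idP).
- by move=> h E hE; apply: contra h => xE; apply: in_cover hE xE.
- by move=> h; apply/negP => /bigcupP [E hE xE]; move: (h E hE); rewrite xE.
Qed.

Lemma switch (T : finType) (e : rel T) (e_sym : symmetric e) (e_irr : irreflexive e) ps :
  forall M s, matching e M -> s \notin cover M -> apath e M s ps -> uniq (s :: pflat ps) ->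
  exists M', [/\ matching e M', #|M'| = #|M| & pend s ps \notin cover M'].
Proof.
elim: ps => [|[a b] ps IH] M s mM sM.
  by move=> _ _; exists M.
rewrite /= => /and3P [esa hab hp].
rewrite /pflat /= -/(pflat ps) => /andP [ns /andP [na /andP [nb ups]]].
move: ns na nb; rewrite !inE !negb_or => /and3P [nsa nsb nsps] /andP [nab naps] nbps.
have eab : e a b := edge_pair e_sym e_irr (match_edge mM hab).
set M1 := [set s; a] |: (M :\ [set a; b]).
have sE : forall E, E \in M -> s \notin E by apply/notcoverP.
have aE : forall E, E \in M -> E != [set a; b] -> a \notin E.
  move=> E hE nE; apply/negP => aE; move/eqP: nE; apply.
  by apply: (@match_uniq _ _ _ _ _ a mM hE hab aE); rewrite !inE eqxx.
have bE : forall E, E \in M -> E != [set a; b] -> b \notin E.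
  move=> E hE nE; apply/negP => bE; move/eqP: nE; apply.
  by apply: (@match_uniq _ _ _ _ _ b mM hE hab bE); rewrite !inE eqxx orbT.
have mM1 : matching e M1.
  apply/andP; split.
    apply/forallP => E; apply/implyP; rewrite !inE => /orP [/eqP ->|/andP [_ hE]].
      by apply/existsP; exists s; apply/existsP; exists a; rewrite esa eqxx.
    exact: match_edge mM hE.
  apply/forallP => E1; apply/implyP => h1; apply/forallP => E2; apply/implyP => h2; apply/implyP => n12.
  have key : forall F, F \in M -> F != [set a; b] -> [disjoint [set s; a] & F].
    move=> F hF nF; rewrite -setI_eq0; apply/eqP/setP => z; rewrite !inE.
    apply/negP => /andP [/orP [/eqP ->|/eqP ->]]; [exact/negP/sE | exact/negP/aE].
  move: h1 h2 n12; rewrite !inE => /orP [/eqP ->|/andP [n1 h1]] /orP [/eqP ->|/andP [n2 h2]] n12.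
  - by rewrite eqxx in n12.
  - exact: key.
  - by rewrite disjoint_sym; apply: key.
  - case/andP: mM => _ /forallP /(_ E1); rewrite h1 => /forallP /(_ E2); rewrite h2 n12; exact.
have cM1 : #|M1| = #|M|.
  rewrite cardsU1 (cardsD1 [set a; b] M) hab !inE negb_and; congr (_ + _).
  suff -> : [set s; a] \notin M by rewrite orbT.
  by apply/negP => /sE; rewrite !inE eqxx.
have bM1 : b \notin cover M1.
  apply/notcoverP => E; rewrite !inE => /orP [/eqP ->|/andP [nE hE]].
    rewrite !inE negb_or; apply/andP; split.
      by rewrite eq_sym.
    by apply/negP => /eqP ba; move: eab; rewrite ba e_irr.
  exact: bE.
have hp1 : apath e M1 b ps.
  apply: (apath_mono hp) => a' b' ha' h'; rewrite !inE h' andbT; apply/orP; right.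
  apply/negP => /eqP E; move: (pair_cover h').1 => _.
  have : a' \in [set a; b] by rewrite -E !inE eqxx.
  by rewrite !inE => /orP [/eqP aa|/eqP bb]; [move: naps|move: nbps]; rewrite -?aa -?bb ha'.
have [M' [mM' cM' eM']] := IH M1 b mM1 bM1 hp1 (introT andP (conj nbps ups)).
by exists M'; split => //; rewrite cM' cM1.
Qed.

Lemma prefix_ok (T : finType) (e : rel T) M s ps1 a b ps2 :
  apath e M s (ps1 ++ (a, b) :: ps2) -> uniq (s :: pflat (ps1 ++ (a, b) :: ps2)) ->
  [/\ apath e M s (ps1 ++ [:: (a, b)]), uniq (s :: pflat (ps1 ++ [:: (a, b)])) & [set a; b] \in M].
Proof.
rewrite !apath_cat /= => /andP [h1 /and3P [h2 h3 _]] hu.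
rewrite h1 h2 h3; split => //.
move: hu; rewrite !pflat_cat /pflat /= -/(pflat ps2) -/(pflat ps1).
have -> : [:: a, b & pflat ps2] = [:: a; b] ++ pflat ps2 by [].
by rewrite catA mem_cat cat_uniq negb_or => /andP [/andP [-> _] /andP [-> _]].
Qed.

Lemma mem_pflat_b (T : finType) (ps1 ps2 : seq (T * T)) a b : b \in pflat (ps1 ++ (a, b) :: ps2).
Proof. by rewrite pflat_cat mem_cat /pflat /= !inE eqxx !orbT. Qed.

From Stdlib Require Import ClassicalDescription.

Definition cb (P : Prop) : bool := if excluded_middle_informative P then true else false.
Lemma cbP (P : Prop) : reflect P (cb P).
Proof. by rewrite /cb; case: excluded_middle_informative => h; constructor. Qed.

Lemma matching0 (T : finType) (e : rel T) : matching e set0.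
Proof. by apply/andP; split; apply/forallP => E; rewrite inE. Qed.

Lemma max_exists (T : finType) (e : rel T) : exists2 M, matching e M & #|M| = nu e.
Proof.
exists [arg max_(M > set0 | matching e M) #|M|]; first by case: arg_maxnP => //; exact: matching0.
by rewrite /nu (bigmax_eq_arg set0) //; exact: matching0.
Qed.

Lemma le_nu (T : finType) (e : rel T) M : matching e M -> #|M| <= nu e.
Proof. by move=> mM; rewrite /nu; apply: (leq_bigmax_cond M). Qed.
From mathcomp Require Import zify.

Lemma dir1 (T : finType) (e : rel T) (e_sym : symmetric e) (e_irr : irreflexive e) S :
  independent e S -> #|S| + 2 * nu e = #|nbhd e S| + #|T| -> forall z, z \in Dset e -> z \in S.
Proof.
move=> indS eqS z; rewrite inE => /existsP [M /andP [/andP [mM /eqP cM] zn]].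
set C := cover M.
have cC : #|C| = 2 * nu e by rewrite /C (card_cover e_irr mM) cM.
have sub : partner M @: (S :&: C) \subset nbhd e S.
  apply/subsetP => y /imsetP [v]; rewrite inE => /andP [vS vC] ->.
  rewrite inE; apply/existsP; exists v; rewrite vS; exact: partner_edge.
have inj : {in S :&: C &, injective (partner M)}.
  move=> u v; rewrite !inE => /andP [_ uC] /andP [_ vC] E.
  by rewrite -(partner_invol e_sym e_irr mM uC) E (partner_invol e_sym e_irr mM vC).
have le1 := subset_leq_card sub; rewrite card_in_imset // in le1.
have h1 := cardsID C S; have h2 := cardsC C.
have sub2 : S :\: C \subset ~: C by apply/subsetP => v; rewrite !inE => /andP [].
have : S :\: C == ~: C by rewrite eqEcard sub2 /=; lia.
move/eqP => E; suff : z \in S :\: C by rewrite inE => /andP [].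
by rewrite E inE.
Qed.

Theorem theorem1p3 (T : finType) (e : rel T)
  (e_sym : symmetric e) (e_irr : irreflexive e) :
  tutte_berge_graph e <->
  (forall x y, x \in Dset e -> y \in Dset e -> ~~ e x y).
Proof.
split.
  move=> [S [indS eqS]] x y xD yD.
  have xS := dir1 e_sym e_irr indS eqS xD; have yS := dir1 e_sym e_irr indS eqS yD.
  by move/forallP: indS => /(_ x); rewrite xS => /forallP /(_ y); rewrite yS.
move=> Dind.
have [M0 mM0 cM0] := max_exists e.
set C := cover M0.
set S := [set v | cb (exists s ps, [/\ s \notin C, apath e M0 s ps, uniq (s :: pflat ps) & pend s ps = v])].
have mkS : forall s ps, s \notin C -> apath e M0 s ps -> uniq (s :: pflat ps) -> pend s ps \in S.
  by move=> s ps h1 h2 h3; rewrite inE; apply/cbP; exists s, ps.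
have SD : forall v, v \in S -> v \in Dset e.
  move=> v; rewrite inE => /cbP [s [ps [h1 h2 h3 <-]]].
  have [M' [mM' cM' eM']] := switch e_sym e_irr mM0 h1 h2 h3.
  by rewrite inE; apply/existsP; exists M'; rewrite /max_matching mM' cM' cM0 eqxx.
have Sind : forall u v, u \in S -> v \in S -> ~~ e u v.
  by move=> u v uS vS; apply: Dind; apply: SD.
have unc : forall z, z \notin C -> z \in S.
  by move=> z zC; exact: (mkS z [::] zC).
have nbS : forall x, x \in nbhd e S -> x \in C /\ partner M0 x \in S.
  move=> x; rewrite inE => /existsP [d /andP [dS edx]].
  have xnS : x \notin S by apply/negP => xS; move: (Sind d x dS xS); rewrite edx.
  have xC : x \in C by apply/negPn/negP => /unc; rewrite (negbTE xnS).
  split => //.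
  move: dS; rewrite inE => /cbP [s [ps [sC hp hu pe]]].
  set z := partner M0 x.
  have hz : [set x; z] \in M0 := partnerP mM0 xC.
  have exz : e x z := partner_edge e_sym e_irr mM0 xC.
  have zC : z \in C := partner_cover mM0 xC.
  case: (boolP (x \in s :: pflat ps)).
    rewrite inE => /orP [/eqP xs| /pflat_split [ps1 [a [b [ps2 [Eps [xa|xb]]]]]]].
    - by move: sC; rewrite -xs xC.
    - rewrite Eps in hp hu.
      have [h1 h2 h3] := prefix_ok hp hu.
      have -> : z = b by rewrite /z xa; exact: (partner_uniq e_sym e_irr mM0 h3).
      by have := mkS _ _ sC h1 h2; rewrite pend_cat1.
    - rewrite Eps in hp hu.
      have [h1 h2 h3] := prefix_ok hp hu.
      by have := mkS _ _ sC h1 h2; rewrite pend_cat1 -xb (negbTE xnS).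
  move=> xnp.
  case: (boolP (z \in s :: pflat ps)).
    rewrite inE => /orP [/eqP zs| /pflat_split [ps1 [a [b [ps2 [Eps [za|zb]]]]]]].
    - by move: sC; rewrite -zs zC.
    - rewrite Eps in hp hu xnp.
      have [h1 h2 h3] := prefix_ok hp hu.
      have pb : partner M0 z = b by rewrite za; exact: (partner_uniq e_sym e_irr mM0 h3).
      have : partner M0 z = x by exact: (partner_invol e_sym e_irr mM0 xC).
      by rewrite pb => bx; move: xnp; rewrite -bx inE mem_pflat_b orbT.
    - rewrite Eps in hp hu.
      have [h1 h2 h3] := prefix_ok hp hu.
      by have := mkS _ _ sC h1 h2; rewrite pend_cat1 -zb.
  move=> znp.
  have := mkS s (ps ++ [:: (x, z)]) sC.
  rewrite pend_cat1; apply.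
    by rewrite apath_cat hp /= pe edx hz.
  rewrite pflat_cat -cat_cons cat_uniq hu /=.
  have xz : x != z by apply/negP => /eqP xz; move: exz; rewrite -xz e_irr.
by rewrite orbF (negbTE xnp) (negbTE znp) inE xz.
have img : partner M0 @: (S :&: C) = nbhd e S.
  apply/eqP; rewrite eqEsubset; apply/andP; split.
    apply/subsetP => y /imsetP [v]; rewrite inE => /andP [vS vC] ->.
    rewrite inE; apply/existsP; exists v; rewrite vS; exact: partner_edge.
  apply/subsetP => x /nbS [xC pS]; apply/imsetP; exists (partner M0 x).
    by rewrite inE pS (partner_cover mM0 xC).
  by rewrite (partner_invol e_sym e_irr mM0 xC).
have inj : {in S :&: C &, injective (partner M0)}.
  move=> u v; rewrite !inE => /andP [_ uC] /andP [_ vC] E.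
  by rewrite -(partner_invol e_sym e_irr mM0 uC) E (partner_invol e_sym e_irr mM0 vC).
have cN : #|S :&: C| = #|nbhd e S| by rewrite -img card_in_imset.
have SC : S :\: C = ~: C.
  apply/setP => z; rewrite in_setD in_setC; case zC: (z \in C) => /=; first by []. by apply: unc; rewrite zC.
have h1 := cardsID C S; have h2 := cardsC C.
have cC : #|C| = 2 * nu e by rewrite /C (card_cover e_irr mM0) cM0.
exists S; split.
  apply/forallP => u; apply/implyP => uS; apply/forallP => v; apply/implyP => vS; exact: Sind.
rewrite SC in h1; lia.
Qed.
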